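(* Let $\nu\ge0$, $p_{0x}=-2\cosh(2\pi\nu)$, $\theta_\infty\in\mathbb C$, and suppose $$3p_{0x}^2+p_{0x}^3-12p_{0x}\big(1+\cos(\pi\theta_\infty)\big)+4\cos^2(\pi\theta_\infty)+16\cos(\pi\theta_\infty)+8=0$$ with $(\cos\pi\theta_\infty,p_{0x})$ on the portion of this curve between $(-1,-2)$ and $(1,-7)$, i.e. $\cos(\pi\theta_\infty)\in[-1,1]$. Then $\theta_\infty$ is real and $0\le\nu\le\frac2\pi\ln\mathbf G$, where $\mathbf G=\frac{1+\sqrt5}2$ is the golden ratio. Moreover, with $$c_1(\nu)=2+3\cosh(2\pi\nu)-\cosh(3\pi\nu)-3\cosh(\pi\nu),$$ $$c_2(\nu)=96\cosh(\pi\nu)+52\cosh(3\pi\nu)+12\cosh(5\pi\nu)-50-78\cosh(2\pi\nu)-30\cosh(4\pi\nu)-2\cosh(6\pi\nu),$$ one has $c_2(\nu)\ge0$, $\big|c_1(\nu)-\frac i2\sqrt{c_2(\nu)}\big|=1$ (positive square root), and $$\theta_\infty=\pm\frac1\pi\arg\Big(c_1(\nu)-\frac i2\sqrt{c_2(\nu)}\Big)+2m+1\quad\text{for some sign and some }m\in\mathbb Z,$$ where the argument is chosen with $-\pi\le\arg\big(c_1(\nu)-\frac i2\sqrt{c_2(\nu)}\big)\le0$.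
   Context: This is the cubic relation among the monodromy data $p_{0x}=p_{x1}=p_{01}$ and $p_\infty=2\cos(\pi\theta_\infty)$, $\theta_\infty=2\mu$, of the Fuchsian system associated with the Painlevé VI equation $PVI_\mu$, specialized to $p_{0x}=p_{x1}=p_{01}$; the portion between $(\cos\pi\theta_\infty,p_{0x})=(-1,-2)$ and $(1,-7)$ is the part of the branch with $p_{0x}\le-2$ and $-1\le\cos\pi\theta_\infty\le1$. *)

(* Defs.v *)
From Stdlib Require Import Reals ZArith.
From Coquelicot Require Export Coquelicot.
Open Scope R_scope.

(* Complex cosine, cos(a+ib) = cos a cosh b - i sin a sinh b. *)
Definition Ccos (z : C) : C :=
  (cos (Re z) * cosh (Im z), - (sin (Re z) * sinh (Im z))).

Definition c1 (nu : R) : R :=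
  2 + 3 * cosh (2 * PI * nu) - cosh (3 * PI * nu) - 3 * cosh (PI * nu).

Definition c2 (nu : R) : R :=
  96 * cosh (PI * nu) + 52 * cosh (3 * PI * nu) + 12 * cosh (5 * PI * nu)
  - 50 - 78 * cosh (2 * PI * nu) - 30 * cosh (4 * PI * nu)
  - 2 * cosh (6 * PI * nu).

Definition wnu (nu : R) : C := (c1 nu, - (1/2) * sqrt (c2 nu)).

Definition golden : R := (1 + sqrt 5) / 2.

(* Main.v *)
Require Import Defs.
From Stdlib Require Import Reals ZArith.
From Coquelicot Require Import Coquelicot.
From Stdlib Require Import Lra Psatz.
Open Scope R_scope.

Lemma exp_nat (n : nat) (x : R) : exp (INR n * x) = exp x ^ n.
Proof.
  induction n as [|n IH].
  - simpl. replace (0 * x) with 0 by ring. apply exp_0.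
  - rewrite S_INR. replace ((INR n + 1) * x) with (INR n * x + x) by ring.
    rewrite exp_plus, IH. simpl. ring.
Qed.

Lemma cosh_n (n : nat) (x : R) :
  cosh (INR n * x) = (exp x ^ n + / exp x ^ n) / 2.
Proof.
  unfold cosh. rewrite exp_Ropp, exp_nat. reflexivity.
Qed.

Lemma cosh_le1 (y : R) : cosh y <= 1 -> y = 0.
Proof.
  intro H. unfold cosh in H. rewrite exp_Ropp in H.
  assert (Hu := exp_pos y). set (u := exp y) in *.
  assert (Hi : u * / u = 1) by (field; lra).
  assert (Hv : 0 < / u) by (apply Rinv_0_lt_compat; lra).
  assert (u = 1) by nra.
  rewrite <- (ln_exp y). fold u. rewrite H0. apply ln_1.
Qed.

Lemma cosh_ge1 (y : R) : 1 <= cosh y.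
Proof.
  unfold cosh. rewrite exp_Ropp.
  assert (Hu := exp_pos y). set (u := exp y) in *.
  assert (Hi : u * / u = 1) by (field; lra).
  assert (Hv : 0 < / u) by (apply Rinv_0_lt_compat; lra).
  assert (Hq : 0 <= (u - 1) ^ 2 * / u) by (apply Rmult_le_pos; [apply pow2_ge_0|lra]).
  replace ((u - 1) ^ 2 * / u) with (u - 2 + / u) in Hq by (field; lra).
  lra.
Qed.

Lemma sinh_0 (y : R) : sinh y = 0 -> y = 0.
Proof.
  intro H. unfold sinh in H.
  assert (exp y = exp (- y)) by lra.
  assert (y = - y).
  { transitivity (ln (exp y)); [symmetry; apply ln_exp|].
    rewrite H0. apply ln_exp. }
  lra.
Qed.

Theorem lemma2 (nu p0x : R) (thinf : C) :
  0 <= nu ->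
  p0x = -2 * cosh (2 * PI * nu) ->
  Im (Ccos (RtoC PI * thinf)) = 0 ->
  -1 <= Re (Ccos (RtoC PI * thinf)) <= 1 ->
  (3 * RtoC p0x ^ 2 + RtoC p0x ^ 3
   - 12 * RtoC p0x * (1 + Ccos (RtoC PI * thinf))
   + 4 * Ccos (RtoC PI * thinf) ^ 2 + 16 * Ccos (RtoC PI * thinf) + 8)%C = 0%C ->
  Im thinf = 0 /\
  nu <= 2 / PI * ln golden /\
  0 <= c2 nu /\
  Cmod (wnu nu) = 1 /\
  exists (phi : R) (s : R) (m : Z),
    (* phi = arg (wnu nu), with the branch -PI <= arg <= 0 *)
    -PI <= phi <= 0 /\ cos phi = Re (wnu nu) /\ sin phi = Im (wnu nu) /\
    (s = 1 \/ s = -1) /\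
    thinf = RtoC (s * phi / PI + 2 * IZR m + 1).
Proof.
  intros Hnu Hp Him Hre Heq.
  assert (HPI := PI_RGT_0).
  destruct thinf as [a b].
  assert (E1 : Re (RtoC PI * (a, b))%C = PI * a) by (simpl; ring).
  assert (E2 : Im (RtoC PI * (a, b))%C = PI * b) by (simpl; ring).
  unfold Ccos in Him, Hre, Heq. rewrite E1, E2 in Him, Hre, Heq.
  simpl in Him, Hre.
  assert (hb : b = 0).
  { assert (PI * b = 0).
    { destruct (Rmult_integral (sin (PI * a)) (sinh (PI * b))) as [Hs|Hs].
      - lra.
      - assert (Hsc := sin2_cos2 (PI * a)). unfold Rsqr in Hsc.
        rewrite Hs in Hsc.
        assert (Hc1 := cosh_ge1 (PI * b)).
        apply cosh_le1. nra.
      - now apply sinh_0. }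
    nra. }
  subst b.
  replace (PI * 0) with 0 in Heq, Hre by ring.
  assert (Hc0 : cosh 0 = 1) by (unfold cosh; rewrite Ropp_0, exp_0; field).
  assert (Hs0 : sinh 0 = 0) by (unfold sinh; rewrite Ropp_0, exp_0; field).
  rewrite Hc0, Hs0 in Heq. rewrite Hc0 in Hre.
  set (c := cos (PI * a)) in *.
  apply (f_equal fst) in Heq. simpl in Heq.
  set (x := PI * nu).
  assert (Hx : 0 <= x) by (unfold x; nra).
  assert (Hu := exp_pos x). assert (Hu1 : 1 <= exp x) by (generalize (exp_ineq1_le x); lra).
  set (u := exp x) in *.
  set (h := (u + / u) / 2).
  assert (Hi : u * / u = 1) by (field; lra).
  assert (Hh1 : 1 <= h) by (unfold h, u; rewrite <- exp_Ropp; apply cosh_ge1).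
  assert (C1 : cosh (PI * nu) = h) by (fold x; replace x with (INR 1 * x) by (simpl; ring); rewrite cosh_n; fold u; unfold h; field; lra).
  assert (Ck : forall k : nat, cosh (INR k * PI * nu) = (u ^ k + / u ^ k) / 2).
  { intro k. rewrite Rmult_assoc. fold x. rewrite cosh_n. fold u. reflexivity. }
  assert (C2 : cosh (2 * PI * nu) = 2 * h ^ 2 - 1).
  { replace 2 with (INR 2) at 1 by (simpl; ring). rewrite Ck. unfold h. field; lra. }
  assert (C3 : cosh (3 * PI * nu) = 4 * h ^ 3 - 3 * h).
  { replace 3 with (INR 3) at 1 by (simpl; ring). rewrite Ck. unfold h. field; lra. }
  assert (C4 : cosh (4 * PI * nu) = 8 * h ^ 4 - 8 * h ^ 2 + 1).
  { replace 4 with (INR 4) at 1 by (simpl; ring). rewrite Ck. unfold h. field; lra. }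
  assert (C5 : cosh (5 * PI * nu) = 16 * h ^ 5 - 20 * h ^ 3 + 5 * h).
  { replace 5 with (INR 5) at 1 by (simpl; ring). rewrite Ck. unfold h. field; lra. }
  assert (C6 : cosh (6 * PI * nu) = 32 * h ^ 6 - 48 * h ^ 4 + 18 * h ^ 2 - 1).
  { replace 6 with (INR 6) at 1 by (simpl; ring). rewrite Ck. unfold h. field; lra. }
  assert (Hc1 : Defs.c1 nu = - 4 * h ^ 3 + 6 * h ^ 2 - 1).
  { unfold Defs.c1. rewrite C1, C2, C3. ring. }
  assert (Hc2 : c2 nu = 4 * (1 - Defs.c1 nu ^ 2)).
  { rewrite Hc1. unfold c2. rewrite C1, C2, C3, C4, C5, C6. ring. }
  rewrite C2 in Hp. subst p0x.
  assert (Hfac : 4 * (c - (4 * h ^ 3 - 6 * h ^ 2 + 1)) * (c - (- 4 * h ^ 3 - 6 * h ^ 2 + 1)) = 0).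
  { rewrite <- Heq. ring. }
  assert (Hc : c = 4 * h ^ 3 - 6 * h ^ 2 + 1).
  { destruct (Rmult_integral _ _ Hfac) as [H|H].
    - destruct (Rmult_integral _ _ H) as [H'|H']; lra.
    - exfalso. assert (c = - 4 * h ^ 3 - 6 * h ^ 2 + 1) by lra. nra. }
  assert (Hh32 : h <= 3 / 2).
  { destruct (Rle_lt_dec h (3/2)) as [Hl|Hl]; [exact Hl|exfalso].
    assert (0 < (h - 3/2) * (h * h)) by (apply Rmult_lt_0_compat; nra).
    lra. }
  assert (Hc1c : Defs.c1 nu = - c) by (rewrite Hc1, Hc; ring).
  split; [reflexivity|].
  split.
  {
    assert (Hs5 := sqrt_sqrt 5 ltac:(lra)).
    assert (Hs5p : 0 <= sqrt 5) by apply sqrt_pos.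
    assert (Hs5g : 1 < sqrt 5) by nra.
    assert (Hul : u <= (3 + sqrt 5) / 2).
    { assert (Hv : 0 < / u) by (apply Rinv_0_lt_compat; lra).
      assert (u * u - 3 * u + 1 <= 0).
      { unfold h in Hh32. nra. }
      nra. }
    assert (Hg : golden * golden = (3 + sqrt 5) / 2) by (unfold golden; nra).
    assert (Hgp : 0 < golden) by (unfold golden; lra).
    assert (Hln : x <= 2 * ln golden).
    { replace x with (ln u) by (unfold u; apply ln_exp).
      replace (2 * ln golden) with (ln (golden * golden)) by (rewrite ln_mult; lra).
      apply ln_le; lra. }
    apply (Rmult_le_reg_l PI); [lra|].
    replace (PI * (2 / PI * ln golden)) with (2 * ln golden) by (field; lra).
    exact Hln. }
  assert (Hc2p : 0 <= c2 nu) by (rewrite Hc2, Hc1c; nra).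
  split; [exact Hc2p|].
  split.
  { unfold Cmod, wnu. cbn [fst snd].
    replace (Defs.c1 nu ^ 2 + (- (1 / 2) * sqrt (c2 nu)) ^ 2) with 1.
    - apply sqrt_1.
    - replace ((- (1 / 2) * sqrt (c2 nu)) ^ 2) with (1 / 4 * (sqrt (c2 nu) * sqrt (c2 nu))) by field.
      rewrite sqrt_sqrt by exact Hc2p. rewrite Hc2. field. }
  assert (Hb1 : -1 <= Defs.c1 nu <= 1) by (rewrite Hc1c; lra).
  exists (- acos (Defs.c1 nu)).
  assert (Hab := acos_bound (Defs.c1 nu)).
  assert (Hcos : cos (- acos (Defs.c1 nu)) = Defs.c1 nu) by (rewrite cos_neg; apply cos_acos; exact Hb1).
  assert (Hsin : sin (- acos (Defs.c1 nu)) = - (1 / 2) * sqrt (c2 nu)).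
  { rewrite sin_neg, sin_acos by exact Hb1.
    rewrite Hc2. replace (4 * (1 - Defs.c1 nu ^ 2)) with (Rsqr 2 * (1 - (Defs.c1 nu)²)) by (unfold Rsqr; ring).
    rewrite sqrt_mult_alt by (unfold Rsqr; lra). rewrite sqrt_Rsqr by lra. field. }
  set (phi := - acos (Defs.c1 nu)) in *.
  assert (Hcc : cos (PI * a) - cos (phi + PI) = 0).
  { rewrite neg_cos, Hcos. fold c. lra. }
  rewrite form2 in Hcc.
  assert (Hpi : forall t, a = t / PI -> (a, 0) = RtoC (t / PI)) by (intros t Ht; now rewrite Ht).
  destruct (Rmult_integral _ _ Hcc) as [H|H].
  - destruct (Rmult_integral _ _ H) as [H'|H']; [lra|].
    destruct (sin_eq_0_0 _ H') as [k Hk].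
    exists 1, k. split; [unfold phi; lra|]. split; [exact Hcos|]. split; [exact Hsin|].
    split; [left; reflexivity|].
    unfold RtoC. f_equal. apply (Rmult_eq_reg_l PI); [|lra].
    field_simplify; [|lra]. lra.
  - destruct (sin_eq_0_0 _ H) as [k Hk].
    exists (-1), (k - 1)%Z. split; [unfold phi; lra|]. split; [exact Hcos|]. split; [exact Hsin|].
    split; [right; reflexivity|].
    unfold RtoC. f_equal. rewrite minus_IZR. apply (Rmult_eq_reg_l PI); [|lra].
    field_simplify; [|lra]. lra.
Qed.
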